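(* Let $1<a<b$ be coprime integers and let $D\subseteq G$ be a subdiagram. Then \[ Q(\mathbf{1}_D)=\mathtt{dinv}(D), \] where $\mathbf{1}_D\in\mathbb{R}^G$ is the indicator vector of $D$ (its $i$-th coordinate is $1$ if $i\in D$ and $0$ otherwise). Moreover, if $D\neq\varnothing$ then $Q(\mathbf{1}_D)>0$.
   Context: Fix coprime integers $1<a<b$. Work in the grid $\mathbb{Z}^2$, with $+x$ pointing east and $+y$ pointing north; elements of $\mathbb{Z}^2$ are called cells. Let $g:\mathbb{Z}^2\to\mathbb{Z}$, $g(x,y)=ab-ax-by$ (the value of the cell). For a cell $c=(x,y)$ and an integer $k$, write $c-ka:=(x+k,y)$ (the cell $k$ steps east) and $c-kb:=(x,y+k)$ (the cell $k$ steps north); thus $g(c-ka)=g(c)-ka$ and $g(c-kb)=g(c)-kb$. Let $G=\{(x,y)\in\mathbb{Z}_{\ge1}^2: g(x,y)>0\}$ ($g$ is injective on $G$). A subdiagram is a subset $D\subseteq G$ such that whenever $(x,y)\in D$, $(x',y')\in G$, $x'\le x$ and $y'\le y$, we have $(x',y')\in D$ (equivalently, $D$ is upward closed for the partial order $i\preceq j \iff g(j)-g(i)\in\{ma+nb: m,n\in\mathbb{Z}_{\ge0}\}$). Define $K:\mathbb{Z}\to\mathbb{Z}$ by $K(d)=\mathbf{1}_{d\ge0}-\mathbf{1}_{d\ge a}-\mathbf{1}_{d\ge b}+\mathbf{1}_{d\ge a+b}$ (equivalently $K(d)=\mathbf{1}_{0\le d<a}-\mathbf{1}_{b\le d<a+b}$),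 and the quadratic form on $\mathbb{R}^G$ \[ Q(\mathbf{n})=\sum_{i,j\in G}K\big(g(j)-g(i)\big)\,n_in_j,\qquad \mathbf{n}=(n_i)_{i\in G}. \] For a subdiagram $D$ and $c\in D$, let $\mathrm{arm}_D(c)=\max\{k\ge0: c-ka\in D\}$ and $\mathrm{leg}_D(c)=\max\{k\ge 0: c-kb\in D\}$. Define \[ \mathtt{dinv}(D)=\#\Big\{c\in D:\ \frac{\mathrm{leg}_D(c)}{\mathrm{arm}_D(c)+1}<\frac ab<\frac{\mathrm{leg}_D(c)+1}{\mathrm{arm}_D(c)}\Big\}, \] with the convention that $\frac{\mathrm{leg}_D(c)+1}{0}=+\infty$. *)

(* Defs.v *)
From mathcomp Require Import all_boot all_order all_algebra.
Set Implicit Arguments. Unset Strict Implicit. Unset Printing Implicit Defensive.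
Import Order.TTheory GRing.Theory Num.Theory.
Local Open Scope ring_scope.

(* Cells of G: every (x,y) in G satisfies 1 <= x < b and 1 <= y < a
   (since a*x + b*y < a*b), so G is represented inside the finite type
   'I_b * 'I_a; the first coordinate is x (east), the second y (north). *)
Definition cell (a b : nat) := ('I_b * 'I_a)%type.

Definition gval (a b x y : nat) : int := (a * b)%:Z - (a * x)%:Z - (b * y)%:Z.
Definition g (a b : nat) (c : cell a b) : int := gval a b c.1 c.2.

Definition inG (a b : nat) (c : cell a b) : bool :=
  [&& (0 < c.1)%N, (0 < c.2)%N & 0 < g c].

Definition subdiagram (a b : nat) (D : {set cell a b}) : Prop :=
  (forall c, c \in D -> inG c) /\
  (forall c c' : cell a b, c \in D -> inG c' ->
      (c'.1 <= c.1)%N -> (c'.2 <= c.2)%N -> c' \in D).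

Definition inD (a b : nat) (D : {set cell a b}) (x y : nat) : bool :=
  [exists c in D, (nat_of_ord c.1 == x) && (nat_of_ord c.2 == y)].

(* arm_D(c) = max {k >= 0 : c - ka = (x+k, y) in D};
   any such k satisfies x + k < b, so k < b. *)
Definition arm (a b : nat) (D : {set cell a b}) (c : cell a b) : nat :=
  \max_(k < b | inD D (c.1 + k) c.2) (k : nat).
(* leg_D(c) = max {k >= 0 : c - kb = (x, y+k) in D}; k < a. *)
Definition leg (a b : nat) (D : {set cell a b}) (c : cell a b) : nat :=
  \max_(k < a | inD D c.1 (c.2 + k)) (k : nat).

(* dinv condition: leg/(arm+1) < a/b < (leg+1)/arm, with (leg+1)/0 = +oo *)
Definition dinv_cond (a b : nat) (D : {set cell a b}) (c : cell a b) : bool :=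
  let r : rat := a%:R / b%:R in
  ((leg D c)%:R / (arm D c).+1%:R < r) &&
  ((arm D c == 0%N) || (r < (leg D c).+1%:R / (arm D c)%:R)).

Definition dinv (a b : nat) (D : {set cell a b}) : nat :=
  #|[set c in D | dinv_cond D c]|.

Definition ind (P : bool) : int := if P then 1 else 0.
Definition Kf (a b : nat) (d : int) : int :=
  ind (0 <= d) - ind (a%:Z <= d) - ind (b%:Z <= d) + ind ((a + b)%N%:Z <= d).

Definition Q (a b : nat) (R : numDomainType) (n : cell a b -> R) : R :=
  \sum_(i | inG i) \sum_(j | inG j) ((Kf a b (g j - g i))%:~R * n i * n j).

Definition indic (a b : nat) (R : numDomainType) (D : {set cell a b})
  : cell a b -> R := fun i => if i \in D then 1 else 0.

(* Main.v *)
Require Import Defs.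
From mathcomp Require Import all_boot all_order all_algebra.
From mathcomp Require Import reals.
From mathcomp Require Import zify.
Set Implicit Arguments. Unset Strict Implicit. Unset Printing Implicit Defensive.
Import Order.TTheory GRing.Theory Num.Theory.
Local Open Scope ring_scope.

Lemma indP (P : bool) : (P /\ ind P = 1) \/ (~~ P /\ ind P = 0).
Proof. by rewrite /ind; case: P; [left|right]. Qed.

Ltac indlia := rewrite /Kf;
  repeat match goal with |- context [ind ?P] => have := indP P; move: (ind P) => ? end;
  lia.
Ltac indnia := rewrite /Kf;
  repeat match goal with |- context [ind ?P] => have := indP P; move: (ind P) => ? end;
  nia.

Section Arith.
Variables a b : nat.
Hypothesis ha : (0 < a)%N.
Hypothesis hab : (a < b)%N.

Lemma Wdown (u : int) m :
  \sum_(1 <= x < m.+1) Kf a b (u - (a * x)%:Z) =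
  ind ((a%:Z <= u) && (u < (a * m.+1)%:Z)) -
  ind (((a+b)%N%:Z <= u) && (u < (a * m.+1 + b)%N%:Z)).
Proof.
elim: m => [|m IH].
  rewrite big_geq // muln1; indlia.
rewrite big_nat_recr //= IH.
rewrite !(mulnS a) !PoszD.
have : 0 <= (a * m)%:Z by [].
move: (Posz (a * m)) => A hA.
indlia.
Qed.

Lemma Wup (u : int) m :
  \sum_(1 <= x < m.+1) Kf a b ((a * x)%:Z - u) =
  ind ((0 < u) && (u <= (a * m)%:Z)) -
  ind ((0 < u + b%:Z) && (u + b%:Z <= (a * m)%:Z)).
Proof.
elim: m => [|m IH].
  rewrite big_geq // muln0; indlia.
rewrite big_nat_recr //= IH.
rewrite !(mulnS a) !PoszD.
have : 0 <= (a * m)%:Z by [].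
move: (Posz (a * m)) => A hA.
indlia.
Qed.

Lemma cnt_top n :
  \sum_(1 <= x < n.+2) ind (a * (n.+1 - x) < b)%N =
  ind (a * n < b)%N + \sum_(1 <= x < n.+1) ind (a * (n - x) < b)%N.
Proof.
by rewrite big_nat_recl // subn1.
Qed.

Definition dcb (A L : nat) := (b * L < a * A.+1)%N && ((A == 0%N) || (a * A < b * L.+1)%N).

Lemma dcbE A L : dcb A L = (b * L < a * A.+1)%N && (a * A < b * L.+1)%N.
Proof.
rewrite /dcb; case: eqP => [->|] //=.
by rewrite muln0 muln_gt0 (ltn_trans ha hab).
Qed.

Lemma row_id (x0 A t : nat) : (1 <= x0)%N -> (1 <= t)%N ->
  (ind ((a%:Z <= (a * x0 + b * t)%N%:Z) && ((a * x0 + b * t)%N%:Z < (a * (x0 + A).+1)%:Z)) -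
   ind (((a+b)%N%:Z <= (a * x0 + b * t)%N%:Z) && ((a * x0 + b * t)%N%:Z < (a * (x0 + A).+1 + b)%N%:Z))) +
  (ind ((0 < (a * x0 + b * t)%N%:Z) && ((a * x0 + b * t)%N%:Z <= (a * (x0 + A))%:Z)) -
   ind ((0 < (a * x0 + b * t)%N%:Z + b%:Z) && ((a * x0 + b * t)%N%:Z + b%:Z <= (a * (x0 + A))%:Z)))
  = ind (dcb A t) - ind (dcb A t.-1).
Proof.
move=> hx ht; rewrite !dcbE.
case: t ht => // t _ /=.
rewrite !(mulnS a) !(mulnS b) !mulnDr !PoszD.
have : (a <= a * x0)%N by rewrite -{1}(muln1 a) leq_mul2l hx orbT.
have : 0 <= (a * A)%:Z by [].
have : 0 <= (b * t)%:Z by [].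
move: (a * x0)%N (a * A)%N (b * t)%N => X Y T hT hY hX.
indlia.
Qed.

End Arith.

Section Diag.
Variables a b : nat.

Lemma cell_eq (c c' : cell a b) : (c.1 : nat) = c'.1 -> (c.2 : nat) = c'.2 -> c = c'.
Proof. by case: c c' => [x y] [x' y'] /= h1 h2; congr pair; apply: val_inj. Qed.

Lemma inD_cell (E : {set cell a b}) (c : cell a b) : inD E c.1 c.2 = (c \in E).
Proof.
apply/existsP/idP => [[c' /andP[Hc /andP[/eqP e1 /eqP e2]]]|Hc].
  by rewrite -(cell_eq e1 e2).
by exists c; rewrite Hc !eqxx.
Qed.

Lemma inD_ex (E : {set cell a b}) x y :
  inD E x y -> exists2 c : cell a b, c \in E & (c.1 : nat) = x /\ (c.2 : nat) = y.
Proof. by case/existsP => c /andP[Hc /andP[/eqP e1 /eqP e2]]; exists c. Qed.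

Lemma inD_D1 (E : {set cell a b}) (c : cell a b) x y :
  inD (E :\ c) x y = inD E x y && ~~ ((x == c.1) && (y == c.2)).
Proof.
apply/idP/andP.
  case/inD_ex => c' /setD1P[Hne Hc] [e1 e2]; split.
    by rewrite -e1 -e2 inD_cell.
  apply/negP => /andP[/eqP h1 /eqP h2]; move/eqP: Hne; apply.
  by apply: cell_eq; [rewrite e1 h1 | rewrite e2 h2].
case => /inD_ex [c' Hc [e1 e2]] Hn; rewrite -e1 -e2 inD_cell.
apply/setD1P; split => //; apply/eqP => Ec; move: Hn.
by rewrite -e1 -e2 Ec !eqxx.
Qed.

Lemma gval_pos x y : (0 < gval a b x y) = (a * x + b * y < a * b)%N.
Proof. rewrite /gval; lia. Qed.

Variable D : {set cell a b}.
Hypothesis HD : subdiagram D.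

Lemma inD_props x y : inD D x y ->
  [/\ (0 < x)%N, (0 < y)%N, (x < b)%N, (y < a)%N & (a * x + b * y < a * b)%N].
Proof.
case/inD_ex => c Hc [<- <-].
have := HD.1 c Hc; rewrite /inG /g gval_pos => /and3P[h1 h2 h3].
by split.
Qed.

Lemma inD_down x y x' y' : inD D x y -> (0 < x' <= x)%N -> (0 < y' <= y)%N ->
  inD D x' y'.
Proof.
move=> H /andP[h1 h2] /andP[h3 h4].
have [hx hy hxb hya hG] := inD_props H.
case/inD_ex: H => c Hc [e1 e2].
have hx' : (x' < b)%N by apply: leq_ltn_trans hxb.
have hy' : (y' < a)%N by apply: leq_ltn_trans hya.
pose c' : cell a b := (Ordinal hx', Ordinal hy').
have -> : x' = c'.1 by []. have -> : y' = c'.2 by [].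
rewrite inD_cell; apply: (HD.2 c) => //=; rewrite ?e1 ?e2 //.
rewrite /inG /g /= gval_pos h1 h3 /=.
apply: leq_ltn_trans hG; apply: leq_add; by rewrite leq_mul2l ?h2 ?h4 orbT.
Qed.

Lemma sum_D (E : {set cell a b}) (F : nat -> nat -> int) :
  \sum_(c in E) F c.1 c.2 =
  \sum_(0 <= y < a) \sum_(0 <= x < b) (if inD E x y then F x y else 0).
Proof.
rewrite big_mkcond /=.
transitivity (\sum_(x : 'I_b) \sum_(y : 'I_a) (if (x,y) \in E then F x y else 0)).
  by rewrite pair_bigA; apply: eq_bigr => -[x y] _.
rewrite exchange_big /=.
rewrite big_mkord; apply: eq_bigr => y _.
rewrite big_mkord; apply: eq_bigr => x _.
by rewrite -(inD_cell E (x, y)).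
Qed.

End Diag.

Definition QZ (a b : nat) (D : {set cell a b}) : int :=
  \sum_(i in D) \sum_(j in D) Kf a b (g j - g i).

Definition armN (a b : nat) (D : {set cell a b}) (x y : nat) : nat :=
  \max_(k < b | inD D (x + k) y) (k : nat).
Definition legN (a b : nat) (D : {set cell a b}) (x y : nat) : nat :=
  \max_(k < a | inD D x (y + k)) (k : nat).

Lemma max_eq n N (P : pred nat) : (N < n)%N ->
  (forall k, (k < n)%N -> P k = (k <= N)%N) -> \max_(k < n | P k) (k : nat) = N.
Proof.
move=> hN hP; apply/eqP; rewrite eqn_leq; apply/andP; split.
  by apply/bigmax_leqP => k; rewrite hP.
by apply: (leq_bigmax_cond (Ordinal hN)) => /=; rewrite hP.
Qed.

Lemma ratlt (p q r s : nat) : (0 < q)%N -> (0 < s)%N ->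
  (p%:R / q%:R < r%:R / s%:R :> rat) = (p * s < r * q)%N.
Proof.
move=> hq hs.
by rewrite ltr_pdivlMr ?ltr0n // mulrAC ltr_pdivrMr ?ltr0n // -!natrM ltr_nat.
Qed.

Section Main.
Variables a b : nat.
Hypothesis ha : (1 < a)%N.
Hypothesis hab : (a < b)%N.

Lemma ha0 : (0 < a)%N. Proof. exact: ltnW. Qed.
Lemma hb0 : (0 < b)%N. Proof. exact: ltn_trans ha0 hab. Qed.

Lemma dc_dcb (D : {set cell a b}) c :
  dinv_cond D c = dcb a b (armN D c.1 c.2) (legN D c.1 c.2).
Proof.
rewrite /dinv_cond /dcb -/(arm D c) -/(leg D c) -/(armN D c.1 c.2) -/(legN D c.1 c.2).
rewrite ratlt // ?hb0 // mulnC; congr (_ && _).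
case: eqP => //= /eqP hA.
by rewrite ratlt ?hb0 ?lt0n // (mulnC _ b).
Qed.

Lemma dinv_sum (D : {set cell a b}) :
  (dinv D)%:Z = \sum_(c in D) ind (dcb a b (armN D c.1 c.2) (legN D c.1 c.2)).
Proof.
rewrite /dinv -sum1_card (big_morph Posz PoszD (erefl _)) big_mkcond /=.
rewrite [RHS]big_mkcond /=; apply: eq_bigr => c _.
by rewrite inE -dc_dcb; case: (c \in D); case: (dinv_cond D c).
Qed.

Lemma Q_QZ (R : numDomainType) (D : {set cell a b}) :
  (forall c, c \in D -> inG c) -> Q (indic R D) = (QZ D)%:~R.
Proof.
move=> HG; rewrite /Q /QZ (big_morph (fun z : int => z%:~R) (@intrD R) (mulr0z 1)).
rewrite big_mkcond [RHS]big_mkcond /=; apply: eq_bigr => i _.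
rewrite /indic; case Hi: (i \in D); last first.
  by case: (inG i) => //; apply: big1 => j _; rewrite mulr0 mul0r.
rewrite HG // (big_morph (fun z : int => z%:~R) (@intrD R) (mulr0z 1)).
rewrite big_mkcond [RHS]big_mkcond /=; apply: eq_bigr => j _.
case Hj: (j \in D); last by case: (inG j) => //; rewrite mulr0.
by rewrite HG // !mulr1.
Qed.

Lemma QZ_step (D : {set cell a b}) c : c \in D ->
  QZ D = QZ (D :\ c) + (\sum_(j in D) Kf a b (g j - g c) +
                        \sum_(i in D :\ c) Kf a b (g c - g i)).
Proof.
move=> Hc; rewrite /QZ (big_setD1 c Hc) /=.
rewrite [X in _ + X = _](eq_bigr (fun i => Kf a b (g c - g i) + \sum_(j in D :\ c) Kf a b (g j - g i))); last first.
  by move=> i _; rewrite (big_setD1 c Hc).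
by rewrite [X in _ + X = _]big_split /= addrA addrC.
Qed.

End Main.

Lemma sum_row (P : pred nat) (m n : nat) (F : nat -> int) : (m < n)%N ->
  (forall x, P x = (0 < x <= m)%N) ->
  \sum_(0 <= x < n) (if P x then F x else 0) = \sum_(1 <= x < m.+1) F x.
Proof.
move=> hmn hP; rewrite -big_mkcond (eq_bigl (fun x => (0 < x <= m)%N)) //.
have h1n : (1 <= n)%N by lia.
rewrite (@big_cat_nat _ _ _ m.+1) // (@big_cat_nat _ _ _ 1) //=.
have -> : \sum_(0 <= i < 1 | (0 < i <= m)%N) F i = 0.
  by rewrite big_nat_cond big_pred0 // => i /=; lia.
have -> : \sum_(m.+1 <= i < n | (0 < i <= m)%N) F i = 0.
  by rewrite big_nat_cond big_pred0 // => i /=; lia.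
rewrite add0r addr0 [LHS]big_nat_cond [RHS]big_nat_cond.
by apply: eq_bigl => i /=; lia.
Qed.

Lemma gdiff (a b x y x0 y0 : nat) : (y <= y0)%N ->
  gval a b x y - gval a b x0 y0 = (a * x0 + b * (y0 - y))%N%:Z - (a * x)%:Z.
Proof. move=> h; rewrite /gval; nia. Qed.

Lemma gdiff' (a b x y x0 y0 : nat) : (y <= y0)%N ->
  gval a b x0 y0 - gval a b x y = (a * x)%:Z - (a * x0 + b * (y0 - y))%N%:Z.
Proof. move=> h; rewrite /gval; nia. Qed.

Lemma sum_single (n x0 : nat) (f : nat -> int) : (x0 < n)%N ->
  (forall x, x != x0 -> f x = 0) -> \sum_(0 <= x < n) f x = f x0.
Proof.
move=> hx hf; rewrite (bigD1_seq x0) ?mem_index_iota ?iota_uniq //=.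
by rewrite big1 ?addr0 // => x /hf.
Qed.

Section Step.
Variables a b : nat.
Hypothesis ha : (1 < a)%N.
Hypothesis hab : (a < b)%N.
Variable D : {set cell a b}.
Hypothesis HD : subdiagram D.
Variable c : cell a b.
Hypothesis Hc : c \in D.
Hypothesis Htop : forall c', c' \in D -> (c'.2 <= c.2)%N.
Hypothesis Hright : forall c', c' \in D -> (c'.2 : nat) = c.2 -> (c'.1 <= c.1)%N.

Local Notation x0 := (nat_of_ord c.1).
Local Notation y0 := (nat_of_ord c.2).
Local Notation D' := (D :\ c).

Lemma L_c : inD D x0 y0. Proof. by rewrite inD_cell. Qed.

Lemma L_top x y : inD D x y -> (y <= y0)%N.
Proof. by case/inD_ex => c' Hc' [_ <-]; apply: Htop. Qed.

Lemma L_right x : inD D x y0 -> (x <= x0)%N.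
Proof. by case/inD_ex => c' Hc' [<- e]; apply: Hright. Qed.

Lemma L_props : [/\ (0 < x0)%N, (0 < y0)%N, (x0 < b)%N, (y0 < a)%N
                  & (a * x0 + b * y0 < a * b)%N].
Proof. exact: (inD_props HD L_c). Qed.

Lemma row_y0 x : inD D x y0 = (0 < x <= x0)%N.
Proof.
have [h1 h2 h3 h4 h5] := L_props.
apply/idP/idP => [H|H].
  by have [? ? ? ? ?] := inD_props HD H; rewrite L_right // andbT.
by apply: (inD_down HD L_c) => //; rewrite h2 leqnn.
Qed.

Lemma row_out x y : (y == 0%N) || (y0 < y)%N -> inD D x y = false.
Proof.
move=> hy; apply/negbTE/negP => H.
have [? ? ? ? ?] := inD_props HD H; have := L_top H; lia.
Qed.

Definition mrow y := \max_(x < b | inD D x y) (x : nat).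

Lemma row_mid y : (0 < y <= y0)%N ->
  [/\ (x0 <= mrow y)%N, (mrow y < b)%N & forall x, inD D x y = (0 < x <= mrow y)%N].
Proof.
move=> hy; have [h1 h2 h3 h4 h5] := L_props.
have Hx0 : inD D x0 y by apply: (inD_down HD L_c) => //; rewrite h1 leqnn.
have hm : (mrow y < b)%N.
  have : (mrow y <= b.-1)%N by apply/bigmax_leqP => k _; rewrite -ltnS prednK // (ltn_trans _ hab) // ltnW.
  by move=> h; apply: leq_ltn_trans h _; rewrite prednK // (ltn_trans _ hab) // ltnW.
split => //.
  by apply: (leq_bigmax_cond (Ordinal h3)).
move=> x; apply/idP/idP => [H|H].
  have [hx _ hxb _ _] := inD_props HD H.
  by rewrite hx /=; apply: (leq_bigmax_cond (Ordinal hxb)).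
case Hn: (inD D x y) => //.
have : (mrow y <= x.-1)%N.
  apply/bigmax_leqP => k Hk; case: (ltnP k x) => hkx; first by lia.
  have : inD D x y by apply: (inD_down HD Hk); lia.
  by rewrite Hn.
lia.
Qed.

Lemma col_le x : (0 < x <= x0)%N -> forall y, inD D x y = (0 < y <= y0)%N.
Proof.
move=> hx y; have [h1 h2 h3 h4 h5] := L_props.
apply/idP/idP => [H|H].
  by have [_ -> _ _ _] := inD_props HD H; rewrite (L_top H).
exact: (inD_down HD L_c).
Qed.

Lemma D1E x y : inD D' x y = inD D x y && ~~ ((x == x0) && (y == y0)).
Proof. exact: inD_D1. Qed.

Lemma armN_row (E : {set cell a b}) x y m : (forall x', inD E x' y = (0 < x' <= m)%N) ->
  (0 < x <= m)%N -> (m < b)%N -> armN E x y = (m - x)%N.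
Proof.
move=> hE hx hm; rewrite /armN (@max_eq b (m - x) (fun k => inD E (x + k) y)) //; first by lia.
by move=> k hk; rewrite hE; lia.
Qed.

Lemma legN_col (E : {set cell a b}) x y h : (forall y', inD E x y' = (0 < y' <= h)%N) ->
  (0 < y <= h)%N -> (h < a)%N -> legN E x y = (h - y)%N.
Proof.
move=> hE hy hh; rewrite /legN (@max_eq a (h - y) (fun k => inD E x (y + k))) //; first by lia.
by move=> k hk; rewrite hE; lia.
Qed.

Lemma armN_D1 x y : y != y0 -> armN D' x y = armN D x y.
Proof. by move=> hy; apply: eq_bigl => k; rewrite D1E (negbTE hy) andbF andbT. Qed.

Lemma legN_D1 x y : x != x0 -> legN D' x y = legN D x y.
Proof. by move=> hx; apply: eq_bigl => k; rewrite D1E (negbTE hx) andbT. Qed.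


Definition rowQ y :=
  \sum_(0 <= x < b) (if inD D x y then Kf a b (gval a b x y - gval a b x0 y0) else 0) +
  \sum_(0 <= x < b) (if inD D' x y then Kf a b (gval a b x0 y0 - gval a b x y) else 0).
Definition rowD y :=
  \sum_(0 <= x < b) (if inD D x y then ind (dcb a b (armN D x y) (legN D x y)) else 0) -
  \sum_(0 <= x < b) (if inD D' x y then ind (dcb a b (armN D' x y) (legN D' x y)) else 0).

Lemma dcb0 A : dcb a b A 0 = (a * A < b)%N.
Proof. rewrite (dcbE (ltnW ha) hab) muln0 muln1 /=; lia. Qed.

Lemma R0 x : inD D x y0 = (0 < x <= x0)%N.
Proof. exact: row_y0. Qed.

Lemma R0' x : inD D' x y0 = (0 < x <= x0.-1)%N.
Proof. rewrite D1E row_y0 eqxx andbT; lia. Qed.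

Lemma armD_top x : (0 < x <= x0)%N -> armN D x y0 = (x0 - x)%N.
Proof. have [h1 h2 h3 h4 h5] := L_props; move=> hx; exact: (armN_row R0 hx h3). Qed.

Lemma legD_top x : (0 < x <= x0)%N -> legN D x y0 = 0%N.
Proof.
have [h1 h2 h3 h4 h5] := L_props; move=> hx.
by rewrite (legN_col (col_le hx)) ?subnn // h2 leqnn.
Qed.

Lemma armD'_top x : (0 < x <= x0.-1)%N -> armN D' x y0 = (x0.-1 - x)%N.
Proof. have [h1 h2 h3 h4 h5] := L_props; move=> hx; apply: (armN_row R0' hx); lia. Qed.

Lemma legD'_top x : (0 < x <= x0.-1)%N -> legN D' x y0 = 0%N.
Proof.
have [h1 h2 h3 h4 h5] := L_props; move=> hx.
rewrite legN_D1 ?legD_top //; lia.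
Qed.

Lemma row_eq_top : rowQ y0 = rowD y0.
Proof.
have [h1 h2 h3 h4 h5] := L_props.
have h3' : (x0.-1 < b)%N by lia.
rewrite /rowQ /rowD (sum_row _ h3 R0) (sum_row _ h3' R0') (sum_row _ h3 R0) (sum_row _ h3' R0').
under eq_bigr => x _ do rewrite (@gdiff a b _ _ _ _ (leqnn _)).
under [X in _ + X = _]eq_bigr => x _ do rewrite (@gdiff' a b _ _ _ _ (leqnn _)).
rewrite (Wdown (ltnW ha) hab) (Wup (ltnW ha) hab).
rewrite (@eq_big_nat _ _ _ 1 x0.+1 _ (fun x => ind (a * (x0 - x) < b)%N)); last first.
  by move=> x hx; rewrite armD_top ?legD_top ?dcb0 //; lia.
rewrite (@eq_big_nat _ _ _ 1 x0.-1.+1 _ (fun x => ind (a * (x0.-1 - x) < b)%N)); last first.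
  by move=> x hx; rewrite armD'_top ?legD'_top ?dcb0 //; lia.
move: (nat_of_ord c.1) h1 h5 h3 h3' => [//|n] _ _ _ _ /=.
rewrite cnt_top addrK subnn muln0 addn0 -ltz_nat !(mulnS a) !PoszD.
have : 0 <= (a * n)%:Z by [].
move: (Posz (a * n)) => A hA.
have := ltnW ha; have := hab.
indlia.
Qed.

Lemma colD'_x0 y' : inD D' x0 y' = (0 < y' <= y0.-1)%N.
Proof.
have [h1 h2 h3 h4 h5] := L_props.
rewrite D1E (col_le (x:=x0)) ?h1 ?leqnn // eqxx /=; lia.
Qed.

Lemma row_eq_mid y : (0 < y < y0)%N -> rowQ y = rowD y.
Proof.
move=> hy; have [h1 h2 h3 h4 h5] := L_props.
have hy' : (0 < y <= y0)%N by lia.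
have hyle : (y <= y0)%N by lia.
have [hm1 hm2 hm3] := row_mid hy'.
have hne : y != y0 by lia.
have R' x : inD D' x y = (0 < x <= mrow y)%N by rewrite D1E hm3 (negbTE hne) andbF andbT.
have -> : rowD y = ind (dcb a b (mrow y - x0) (y0 - y)) - ind (dcb a b (mrow y - x0) (y0 - y).-1).
  rewrite /rowD -sumrB (sum_single h3); last first.
    move=> x hx; rewrite D1E (negbTE hx) /= armN_D1 // legN_D1 //.
    by case: (inD D x y); rewrite subrr.
  have hx0 : (0 < x0 <= mrow y)%N by rewrite h1.
  rewrite D1E hm3 hx0 eqxx (negbTE hne) /= armN_D1 //.
  rewrite (armN_row hm3 hx0 hm2) (legN_col (col_le (x:=x0) _)) ?h1 ?leqnn //.
  rewrite (legN_col colD'_x0); try lia.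
  by congr (_ - ind (dcb _ _ _ _)); lia.
rewrite /rowQ (sum_row _ hm2 hm3) (sum_row _ hm2 R').
under eq_bigr => x _ do rewrite (@gdiff a b _ _ _ _ hyle).
under [X in _ + X = _]eq_bigr => x _ do rewrite (@gdiff' a b _ _ _ _ hyle).
rewrite (Wdown (ltnW ha) hab) (Wup (ltnW ha) hab).
move: (mrow y) hm1 => m hm1.
have [A ->] : exists A : nat, m = (x0 + A)%N by exists (m - x0)%N; rewrite subnKC.
rewrite addKn; apply: row_id => //; lia.
Qed.

Lemma row_eq y : (y < a)%N -> rowQ y = rowD y.
Proof.
move=> hya; case: (boolP ((y == 0%N) || (y0 < y)%N)) => hy.
  have E1 x : inD D x y = false := row_out x hy.
  have E2 x : inD D' x y = false by rewrite D1E E1.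
  have Z1 (F : nat -> int) : \sum_(0 <= x < b) (if inD D x y then F x else 0) = 0.
    by apply: big1 => x _; rewrite E1.
  have Z2 (F : nat -> int) : \sum_(0 <= x < b) (if inD D' x y then F x else 0) = 0.
    by apply: big1 => x _; rewrite E2.
  by rewrite /rowQ /rowD !Z1 !Z2.
case: (eqVneq y y0) => [->|hne]; first exact: row_eq_top.
apply: row_eq_mid; move: hy hne; have := L_top L_c; lia.
Qed.

Lemma dQ_rows : \sum_(j in D) Kf a b (g j - g c) + \sum_(i in D') Kf a b (g c - g i)
   = \sum_(0 <= y < a) rowQ y.
Proof.
rewrite (sum_D D (fun x y => Kf a b (gval a b x y - gval a b x0 y0))).
rewrite (sum_D D' (fun x y => Kf a b (gval a b x0 y0 - gval a b x y))).
by rewrite -big_split.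
Qed.

Lemma dD_rows : (dinv D)%:Z - (dinv D')%:Z = \sum_(0 <= y < a) rowD y.
Proof.
rewrite !(dinv_sum ha hab).
rewrite (sum_D D (fun x y => ind (dcb a b (armN D x y) (legN D x y)))).
rewrite (sum_D D' (fun x y => ind (dcb a b (armN D' x y) (legN D' x y)))).
by rewrite -sumrB.
Qed.

Lemma step : QZ D' = (dinv D')%:Z -> QZ D = (dinv D)%:Z.
Proof.
move=> IH; rewrite (QZ_step Hc) IH dQ_rows.
have E : \sum_(0 <= y < a) rowQ y = \sum_(0 <= y < a) rowD y.
  by apply: eq_big_nat => y /andP[_ hy]; apply: row_eq.
by rewrite E -dD_rows addrC subrK.
Qed.

Lemma sub_D' : subdiagram D'.
Proof.
split.
  by move=> c' /setD1P[_ Hc']; apply: HD.1.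
move=> c1 c2 /setD1P[hne Hc1] HG h1 h2; apply/setD1P; split; last exact: (HD.2 c1 c2).
apply/eqP => E; rewrite E in h1 h2; move/eqP: hne; apply.
have e2 : (c1.2 : nat) = c.2 by apply/eqP; rewrite eqn_leq h2 Htop.
by apply: cell_eq => //; apply/eqP; rewrite eqn_leq h1 Hright.
Qed.

End Step.

Lemma main_eq (a b : nat) : (1 < a)%N -> (a < b)%N ->
  forall n (D : {set cell a b}), #|D| = n -> subdiagram D -> QZ D = (dinv D)%:Z.
Proof.
move=> ha hab; elim => [|n IH] D hn HD.
  rewrite (cards0_eq hn) /QZ big_set0 /dinv.
  have -> : [set c in (set0 : {set cell a b}) | dinv_cond set0 c] = set0.
    by apply/setP => x; rewrite !inE.
  by rewrite cards0.
have : (0 < #|D|)%N by rewrite hn.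
case/card_gt0P => c0 Hc0.
case: (@arg_maxnP _ c0 (fun c => c \in D) (fun c : cell a b => (c.2 * b + c.1)%N) Hc0) => c Hc Hmax.
have Htop : forall c', c' \in D -> (c'.2 <= c.2)%N.
  move=> c' Hc'; have /= := Hmax c' Hc'; have := ltn_ord c'.1; have := ltn_ord c.1.
  move: (c'.2 : nat) (c.2 : nat) (c'.1 : nat) (c.1 : nat) => y' y x' x hx hx' hle.
  case: (leqP y' y) => // hlt; exfalso.
  have : (y.+1 * b <= y' * b)%N by rewrite leq_mul2r hlt orbT.
  rewrite mulSn; lia.
have Hright : forall c', c' \in D -> (c'.2 : nat) = c.2 -> (c'.1 <= c.1)%N.
  move=> c' Hc' e; have /= := Hmax c' Hc'; by rewrite e leq_add2l.
apply: (step ha hab HD Hc Htop Hright).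
apply: IH; last exact: (sub_D' HD Htop Hright).
by move: hn; rewrite (cardsD1 c) Hc add1n => -[].
Qed.

Theorem theorem1p1 (R : realType) (a b : nat) (D : {set cell a b}) :
  (1 < a)%N -> (a < b)%N -> coprime a b -> subdiagram D ->
  Q (indic R D) = (dinv D)%:R /\ (D != set0 -> 0 < Q (indic R D)).
Proof.
move=> ha hab _ HD.
have EQ : Q (indic R D) = (dinv D)%:R.
  by rewrite (Q_QZ _ HD.1) (main_eq ha hab (erefl _) HD) pmulrn.
split => // /set0Pn [c0 Hc0]; rewrite EQ ltr0n.
case: (@arg_maxnP _ c0 (fun c => c \in D) (fun c : cell a b => (c.2 * b + c.1)%N) Hc0) => c Hc Hmax.
have Htop : forall c', c' \in D -> (c'.2 <= c.2)%N.
  move=> c' Hc'; have /= := Hmax c' Hc'; have := ltn_ord c'.1; have := ltn_ord c.1.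
  move: (c'.2 : nat) (c.2 : nat) (c'.1 : nat) (c.1 : nat) => y' y x' x hx hx' hle.
  case: (leqP y' y) => // hlt; exfalso.
  have : (y.+1 * b <= y' * b)%N by rewrite leq_mul2r hlt orbT.
  rewrite mulSn; lia.
have Hright : forall c', c' \in D -> (c'.2 : nat) = c.2 -> (c'.1 <= c.1)%N.
  move=> c' Hc' e; have /= := Hmax c' Hc'; by rewrite e leq_add2l.
apply/card_gt0P; exists c; rewrite inE Hc /= (dc_dcb ha hab).
have [h1 h2 h3 h4 h5] := L_props HD Hc.
rewrite (armD_top ha hab HD Hc Hright) ?h1 ?leqnn // (legD_top ha hab HD Hc Htop) ?h1 ?leqnn //.
by rewrite subnn (dcb0 ha hab Hc) muln0 (ltn_trans _ hab) // ltnW.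
Qed.
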